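(* Let $\mathbb{N}\subseteq\mathbb{R}^n$ be a linear subspace. There exists a constant $C(\mathbb{N})<1$ such that for all ${\bm a},{\bm b}\in\mathbb{R}^n$ and ${\bm r}\in\mathbb{N}$ with $\operatorname{sgn}({\bm a})=\operatorname{sgn}({\bm b})$ (componentwise, with $\operatorname{sgn}(0)=0$) and ${\bm b}\in\mathbb{N}^\perp$, we have $|\langle{\bm r},{\bm a}\rangle|\le C(\mathbb{N})\|{\bm r}\|_2\|{\bm a}\|_2$. *)

(* Defs.v *)
From HB Require Import structures.
From mathcomp Require Import all_boot all_order all_algebra.
From mathcomp Require Import reals.
Set Implicit Arguments. Unset Strict Implicit. Unset Printing Implicit Defensive.
Import Order.TTheory GRing.Theory Num.Theory.
Local Open Scope ring_scope.

Definition dotv (R : realType) (n : nat) (u v : 'rV[R]_n) : R :=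
  \sum_(i < n) u 0 i * v 0 i.

Definition norm2 (R : realType) (n : nat) (u : 'rV[R]_n) : R :=
  Num.sqrt (dotv u u).

Definition in_perp (R : realType) (n : nat) (N : {vspace 'rV[R]_n}) (b : 'rV[R]_n) : Prop :=
  forall v, v \in N -> dotv v b = 0.

Definition same_sign (R : realType) (n : nat) (a b : 'rV[R]_n) : Prop :=
  forall i : 'I_n, Num.sg (a 0 i) = Num.sg (b 0 i).

(* Main.v *)
Require Import Defs.
From HB Require Import structures.
From mathcomp Require Import all_boot all_order all_algebra.
From mathcomp Require Import reals.
From mathcomp Require Import ring lra.
From Stdlib Require Import Classical.
Import Order.TTheory GRing.Theory Num.Theory.
Local Open Scope ring_scope.

Section Aux.
Variable R : realType.

Lemma ex_unif (T : eqType) (s : seq T) (Q : T -> R -> Prop) :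
  (forall t e e', 0 < e' -> e' <= e -> Q t e -> Q t e') ->
  (forall t, exists2 e, 0 < e & Q t e) ->
  exists2 e, 0 < e & forall t, t \in s -> Q t e.
Proof.
move=> Qmon Qex; elim: s => [|x s [e1 e1p IH]].
  by exists 1 => //.
have [e2 e2p Qx] := Qex x.
exists (Num.min e1 e2); first by rewrite lt_min e1p e2p.
move=> t; rewrite inE => /orP[/eqP->|ts].
  apply: (Qmon _ e2) => //; first by rewrite lt_min e1p e2p.
  by rewrite ge_min lexx orbT.
apply: (Qmon _ e1); [by rewrite lt_min e1p e2p| by rewrite ge_min lexx| exact: IH].
Qed.

Variable n : nat.
Implicit Types u v w : 'rV[R]_n.

Lemma dotvC u v : dotv u v = dotv v u.
Proof. by rewrite /dotv; apply: eq_bigr => i _; rewrite mulrC. Qed.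

Lemma dotvDr u v w : dotv u (v + w) = dotv u v + dotv u w.
Proof. by rewrite /dotv -big_split; apply: eq_bigr => i _; rewrite mxE mulrDr. Qed.

Lemma dotvZr u k v : dotv u (k *: v) = k * dotv u v.
Proof. by rewrite /dotv mulr_sumr; apply: eq_bigr => i _; rewrite mxE mulrCA. Qed.

Lemma dotvNr u v : dotv u (- v) = - dotv u v.
Proof. by rewrite /dotv -sumrN; apply: eq_bigr => i _; rewrite mxE mulrN. Qed.

Lemma dotvBr u v w : dotv u (v - w) = dotv u v - dotv u w.
Proof. by rewrite dotvDr dotvNr. Qed.

Lemma dotvDl u v w : dotv (v + w) u = dotv v u + dotv w u.
Proof. by rewrite dotvC dotvDr !(dotvC u). Qed.
Lemma dotvZl u k v : dotv (k *: v) u = k * dotv v u.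
Proof. by rewrite dotvC dotvZr dotvC. Qed.
Lemma dotvBl u v w : dotv (v - w) u = dotv v u - dotv w u.
Proof. by rewrite dotvC dotvBr !(dotvC u). Qed.

Lemma dotv_ge0 u : 0 <= dotv u u.
Proof. by apply: sumr_ge0 => i _; rewrite -expr2 sqr_ge0. Qed.

Lemma dotv_eq0 u : dotv u u = 0 -> u = 0.
Proof.
move=> /eqP; rewrite /dotv psumr_eq0; last by move=> i _; rewrite -expr2 sqr_ge0.
move=> /allP H; apply/rowP => i; rewrite mxE.
have := H i (mem_index_enum _); rewrite /= -expr2 sqrf_eq0 => /eqP //.
Qed.

Lemma CS u v : dotv u v ^+ 2 <= dotv u u * dotv v v.
Proof.
have [V0|V0] := eqVneq (dotv v v) 0.
  rewrite V0 mulr0 (@dotv_eq0 v V0).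
  have -> : dotv u 0 = 0 by rewrite /dotv big1 // => i _; rewrite mxE mulr0.
  by rewrite expr0n.
set t := dotv u v / dotv v v.
have := dotv_ge0 (u - t *: v).
rewrite !dotvBl !dotvBr !dotvZl !dotvZr (dotvC v u) /t.
have Vp : 0 < dotv v v by rewrite lt_def V0 dotv_ge0.
move=> H.
have E : dotv u u - dotv u v / dotv v v * dotv u v -
    (dotv u v / dotv v v * dotv u v - dotv u v / dotv v v * (dotv u v / dotv v v * dotv v v))
  = (dotv u u * dotv v v - dotv u v ^+ 2) / dotv v v by field.
rewrite E in H.
have := mulr_ge0 H (ltW Vp).
by rewrite divfK // subr_ge0.
Qed.


Definition pat (u : 'rV[R]_n) : {ffun 'I_n -> bool * bool} := [ffun i => (0 < u 0 i, u 0 i < 0)].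

Lemma sg_eqP (x y : R) :
  Num.sg x = Num.sg y <-> ((0 < x) = (0 < y) /\ (x < 0) = (y < 0)).
Proof.
case: (ltrgt0P x) => [hx|hx|->]; case: (ltrgt0P y) => [hy|hy|->];
  rewrite ?(gtr0_sg hx) ?(ltr0_sg hx) ?(gtr0_sg hy) ?(ltr0_sg hy) ?sgr0 ?ltxx //.
all: split; [ first [ by move=> _ | move=> H; exfalso; lra ] | first [by move=> _ | by case ] ].
Qed.
Lemma sg_prod_ge0 (x y : R) : Num.sg x = Num.sg y -> 0 <= x * y.
Proof.
case: (ltrgt0P x) => [hx|hx|->]; case: (ltrgt0P y) => [hy|hy|->];
  rewrite ?(gtr0_sg hx) ?(ltr0_sg hx) ?(gtr0_sg hy) ?(ltr0_sg hy) ?sgr0 ?mul0r ?mulr0 // => H; try (exfalso; lra).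
- by rewrite mulr_ge0 // ltW.
- by rewrite mulr_le0 // ltW.
Qed.

Lemma sg_eq0 (x y : R) : Num.sg x = Num.sg y -> y = 0 -> x = 0.
Proof. by move=> H hy; apply/eqP; rewrite -sgr_eq0 H hy sgr0. Qed.

Lemma same_sign_pat a b : same_sign a b <-> pat a = pat b.
Proof.
split.
  move=> H; apply/ffunP => i; rewrite !ffunE.
  by have [-> ->] := (sg_eqP _ _).1 (H i).
move=> H i; apply/sg_eqP; have := congr1 (fun f : {ffun _ -> _} => f i) H; rewrite !ffunE.
by case=> -> ->.
Qed.

Definition good (b : 'rV[R]_n) (e : R) := forall a, same_sign a b -> e * dotv a a * dotv b b <= dotv a b ^+ 2.

Lemma good_mon b e e' : 0 < e' -> e' <= e -> good b e -> good b e'.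
Proof.
move=> _ le H a sab; apply: le_trans (H a sab).
by rewrite ler_wpM2r ?dotv_ge0 // ler_wpM2r ?dotv_ge0.
Qed.

Lemma sumsq_le (I : finType) (F : I -> R) :
  (forall i, 0 <= F i) -> \sum_i F i ^+ 2 <= (\sum_i F i) ^+ 2.
Proof.
move=> F0; rewrite [X in _ <= X]expr2 mulr_suml; apply: ler_sum => i _.
rewrite expr2; apply: ler_wpM2l => //.
by rewrite (bigD1 i) //= lerDl sumr_ge0.
Qed.

Lemma good_ex b : exists2 e, 0 < e & good b e.
Proof.
have [B0|B0] := eqVneq (dotv b b) 0.
  by exists 1 => // a _; rewrite B0 mulr0 sqr_ge0.
have Bp : 0 < dotv b b by rewrite lt_def B0 dotv_ge0.
have Hex : forall i : 'I_n, exists2 e, 0 < e & (b 0 i != 0 -> e <= b 0 i ^+ 2).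
  move=> i; have [hb|hb] := eqVneq (b 0 i) 0.
    by exists 1 => //; rewrite hb eqxx.
  by exists (b 0 i ^+ 2) => //; rewrite lt_def sqrf_eq0 hb sqr_ge0.
have [mu mup Hmu] := @ex_unif _ (enum 'I_n)
   (fun i e => b 0 i != 0 -> e <= b 0 i ^+ 2)
   (fun t e e' _ lee H hb => le_trans lee (H hb)) Hex.
exists (mu / dotv b b); first by rewrite divr_gt0.
move=> a sab; rewrite -mulrA (mulrC (dotv a a)) mulrA divfK //.
have F0 : forall i, 0 <= a 0 i * b 0 i by move=> i; apply: sg_prod_ge0 (sab i).
rewrite /dotv; apply: le_trans (@sumsq_le _ (fun i => a 0 i * b 0 i) F0).
rewrite mulr_sumr; apply: ler_sum => i _.
have [hb|hb] := eqVneq (b 0 i) 0.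
  by rewrite (sg_eq0 _ _ (sab i) hb) !mul0r mulr0 sqr_ge0.
have hi : i \in enum 'I_n by rewrite mem_enum.
rewrite exprMn -expr2 mulrC; apply: ler_wpM2l; first exact: sqr_ge0.
exact: Hmu i hi hb.
Qed.

Lemma core (r a b : 'rV[R]_n) (e : R) : dotv r b = 0 -> 0 < dotv b b ->
  e * dotv a a * dotv b b <= dotv a b ^+ 2 ->
  dotv r a ^+ 2 <= (1 - e) * dotv r r * dotv a a.
Proof.
move=> rb Bp H.
set t := dotv a b / dotv b b.
have E1 : dotv r (a - t *: b) = dotv r a by rewrite dotvBr dotvZr rb mulr0 subr0.
have E2 : dotv (a - t *: b) (a - t *: b) = dotv a a - dotv a b ^+ 2 / dotv b b.
  rewrite !dotvBl !dotvBr !dotvZl !dotvZr (dotvC b a) /t.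
  by field; rewrite gt_eqF.
have H3 : e * dotv a a <= dotv a b ^+ 2 / dotv b b by rewrite ler_pdivlMr.
move: H3 E2; set X := dotv a b ^+ 2 / dotv b b => H3 E2.
have H4 : dotv a a - X <= (1 - e) * dotv a a by lra.
have := CS r (a - t *: b); rewrite E1 E2 => H2.
apply: le_trans H2 _; rewrite (mulrC (1 - e)) -mulrA.
by apply: ler_wpM2l H4; exact: dotv_ge0.
Qed.

End Aux.


Arguments dotv_ge0 {R n}.
Arguments pat {R n}.
Arguments good {R n}.
Arguments good_ex {R n}.
Arguments good_mon {R n}.
Arguments same_sign_pat {R n}.
Arguments core {R n}.
Arguments sg_eq0 {R}.

Theorem mainTheorem6 (R : realType) (n : nat) (N : {vspace 'rV[R]_n}) :
  exists C : R, C < 1 /\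
    forall a b r : 'rV[R]_n,
      r \in N -> same_sign a b -> in_perp N b ->
      `|dotv r a| <= C * norm2 r * norm2 a.
Proof.
pose Q := fun (p : {ffun 'I_n -> bool * bool}) (e : R) =>
  (exists b, in_perp N b /\ pat b = p) ->
  exists b, [/\ in_perp N b, pat b = p & good b e].
have Qmon : forall p e e', 0 < e' -> e' <= e -> Q p e -> Q p e'.
  move=> p e e' e'p lee H /H [b [h1 h2 h3]]; exists b; split=> //.
  exact: good_mon b e e' e'p lee h3.
have Qex : forall p, exists2 e, 0 < e & Q p e.
  move=> p; case: (classic (exists b, in_perp N b /\ pat b = p)) => [[b [h1 h2]]|nb].
    have [e ep g] := good_ex b; exists e => // _; exists b; split=> //.
  by exists 1 => // /nb.
have [e0 e0p He] := @ex_unif R _ (enum {ffun 'I_n -> bool * bool}) Q Qmon Qex.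
set e := Num.min e0 1.
have ep : 0 < e by rewrite lt_min e0p ltr01.
have e1 : e <= 1 by rewrite ge_min lexx orbT.
have ee0 : e <= e0 by rewrite ge_min lexx.
exists (Num.sqrt (1 - e)); split.
  rewrite -[X in _ < X]sqrtr1 ltr_sqrt ?ltr01 //; lra.
move=> a b r rN sab pb.
have hp : pat a \in enum {ffun 'I_n -> bool * bool} by rewrite mem_enum.
have [b' [pb' pat' gb']] : exists b, [/\ in_perp N b, pat b = pat a & good b e0].
  apply: (He _ hp); exists b; split=> //; exact/esym/(same_sign_pat a b).
have gb : good b' e by apply: good_mon gb'.
have sab' : same_sign a b' by apply/same_sign_pat; rewrite pat'.
have rb : dotv r b' = 0 by apply: pb'.
have Cge : 0 <= Num.sqrt (1 - e) * norm2 r * norm2 a.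
  by rewrite /norm2 !mulr_ge0 ?sqrtr_ge0.
have [B0|B0] := eqVneq (dotv b' b') 0.
  have b'0 := @dotv_eq0 R n b' B0.
  have a0 : a = 0.
    apply/rowP => i; rewrite mxE; apply: (sg_eq0 _ _ (sab' i)).
    by rewrite b'0 mxE.
  have -> : dotv r a = 0 by rewrite a0 /dotv big1 // => i _; rewrite mxE mulr0.
  by rewrite normr0.
have Bp : 0 < dotv b' b' by rewrite lt_def B0 dotv_ge0.
have H := core r a b' e rb Bp (gb a sab').
rewrite /norm2 -!sqrtrM ?subr_ge0 ?mulr_ge0 ?dotv_ge0 ?subr_ge0 //.
by rewrite -sqrtr_sqr ler_sqrt // !mulr_ge0 ?dotv_ge0 ?subr_ge0.
Qed.
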